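(* Let $(X,T)$ be a minimal Cantor system, $p\geq 1$ and $U\subseteq X$ clopen. Then for all $x,y\in X$, $$\mathrm{PS}_p(x,U)=\emptyset \iff \mathrm{PS}_p(y,U)=\emptyset .$$
   Context: A minimal Cantor system is a pair $(X,T)$ where $X$ is a Cantor space, $T:X\to X$ a homeomorphism, and every orbit $\{T^n x : n\in\mathbb Z\}$ is dense in $X$. For $x\in X$, a clopen $U\subseteq X$ and an integer $p\geq 1$, $\mathrm{PS}_p(x,U)=\{k\in\mathbb Z : T^{k+np}x\in U \text{ for all } n\in\mathbb Z\}$. *)

(* Defs.v *)
From Stdlib Require Import Reals ZArith.
Open Scope R_scope.

Set Implicit Arguments.

Record topology (X : Type) : Type := {
  is_open : (X -> Prop) -> Prop;
  open_full : is_open (fun _ => True);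
  open_empty : is_open (fun _ => False);
  open_inter : forall U V, is_open U -> is_open V -> is_open (fun x => U x /\ V x);
  open_union : forall (I : Type) (F : I -> X -> Prop),
      (forall i, is_open (F i)) -> is_open (fun x => exists i, F i x)
}.

Definition is_closed {X} (t : topology X) (A : X -> Prop) : Prop :=
  is_open t (fun x => ~ A x).

Definition is_clopen {X} (t : topology X) (A : X -> Prop) : Prop :=
  is_open t A /\ is_closed t A.

Definition compact {X} (t : topology X) : Prop :=
  forall (I : Type) (F : I -> X -> Prop),
    (forall i, is_open t (F i)) ->
    (forall x, exists i, F i x) ->
    exists l : list I, forall x, exists i, List.In i l /\ F i x.

Definition is_metric {X} (d : X -> X -> R) : Prop :=
  (forall x y, 0 <= d x y) /\
  (forall x y, d x y = 0 <-> x = y) /\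
  (forall x y, d x y = d y x) /\
  (forall x y z, d x z <= d x y + d y z).

Definition metric_open {X} (d : X -> X -> R) (U : X -> Prop) : Prop :=
  forall x, U x -> exists eps, 0 < eps /\ forall y, d x y < eps -> U y.

Definition metrizable {X} (t : topology X) : Prop :=
  exists d : X -> X -> R, is_metric d /\
    forall U, is_open t U <-> metric_open d U.

Definition connected_subset {X} (t : topology X) (A : X -> Prop) : Prop :=
  forall U V, is_open t U -> is_open t V ->
    (forall x, A x -> U x \/ V x) ->
    (forall x, A x -> ~ (U x /\ V x)) ->
    (forall x, A x -> U x) \/ (forall x, A x -> V x).

Definition totally_disconnected {X} (t : topology X) : Prop :=
  forall A, connected_subset t A -> forall x y, A x -> A y -> x = y.

Definition perfect {X} (t : topology X) : Prop :=
  forall x, ~ is_open t (fun y => y = x).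

Definition cantor_space {X} (t : topology X) : Prop :=
  inhabited X /\ compact t /\ metrizable t /\ totally_disconnected t /\ perfect t.

Definition continuous {X} (t : topology X) (f : X -> X) : Prop :=
  forall U, is_open t U -> is_open t (fun x => U (f x)).

Definition homeomorphism {X} (t : topology X) (T Tinv : X -> X) : Prop :=
  (forall x, Tinv (T x) = x) /\ (forall x, T (Tinv x) = x) /\
  continuous t T /\ continuous t Tinv.

Definition Tpow {X} (T Tinv : X -> X) (n : Z) (x : X) : X :=
  match n with
  | Z0 => x
  | Zpos p => Nat.iter (Pos.to_nat p) T x
  | Zneg p => Nat.iter (Pos.to_nat p) Tinv x
  end.

Definition dense {X} (t : topology X) (A : X -> Prop) : Prop :=
  forall V, is_open t V -> (exists y, V y) -> exists y, V y /\ A y.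

Definition orbit {X} (T Tinv : X -> X) (x : X) : X -> Prop :=
  fun y => exists n : Z, Tpow T Tinv n x = y.

Definition minimal_cantor_system {X} (t : topology X) (T Tinv : X -> X) : Prop :=
  cantor_space t /\ homeomorphism t T Tinv /\
  forall x, dense t (orbit T Tinv x).

Definition PS {X} (T Tinv : X -> X) (p : Z) (x : X) (U : X -> Prop) : Z -> Prop :=
  fun k => forall n : Z, U (Tpow T Tinv (k + n * p)%Z x).

Definition set_empty_Z (A : Z -> Prop) : Prop := forall k, ~ A k.

(* Main.v *)
Require Import Defs.
From Stdlib Require Import Reals ZArith Lia Classical FunctionalExtensionality PropExtensionality.

Section Aux.
Variables (X : Type) (T Tinv : X -> X).
Hypothesis hK1 : forall x, Tinv (T x) = x.
Hypothesis hK2 : forall x, T (Tinv x) = x.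

Lemma Tpow_succ : forall n x, Tpow T Tinv (Z.succ n) x = T (Tpow T Tinv n x).
Proof.
  intros [|q|q] x.
  - reflexivity.
  - unfold Z.succ. change (Z.pos q + 1)%Z with (Z.pos (q + 1)). simpl. rewrite Pos2Nat.inj_add. simpl.
    rewrite Nat.add_comm. simpl. reflexivity.
  - unfold Z.succ. destruct (Pos.succ_pred_or q) as [->|Hq].
    + simpl. rewrite hK2. reflexivity.
    + rewrite <- Hq. set (r := Pos.pred q).
      replace (Z.neg (Pos.succ r) + 1)%Z with (Z.neg r) by lia.
      unfold Tpow. rewrite Pos2Nat.inj_succ. simpl. rewrite hK2. reflexivity.
Qed.

Lemma Tpow_pred : forall n x, Tpow T Tinv (Z.pred n) x = Tinv (Tpow T Tinv n x).
Proof.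
  intros n x. rewrite <- (Z.succ_pred n) at 2. rewrite Tpow_succ. rewrite hK1. reflexivity.
Qed.

Lemma Tpow_add : forall a b x, Tpow T Tinv a (Tpow T Tinv b x) = Tpow T Tinv (a + b) x.
Proof.
  intros a b x. induction a using Z.peano_ind.
  - reflexivity.
  - rewrite Tpow_succ, IHa. replace (Z.succ a + b)%Z with (Z.succ (a + b)) by lia.
    rewrite Tpow_succ. reflexivity.
  - rewrite Tpow_pred, IHa. replace (Z.pred a + b)%Z with (Z.pred (a + b)) by lia.
    rewrite Tpow_pred. reflexivity.
Qed.

Lemma open_ext (t : topology X) (A B : X -> Prop) :
  is_open t A -> (forall x, A x <-> B x) -> is_open t B.
Proof.
  intros HA H. replace B with A; auto.
  apply functional_extensionality; intro x; apply propositional_extensionality; auto.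
Qed.

Lemma Tpow_cont (t : topology X) : continuous t T -> continuous t Tinv ->
  forall n W, is_open t W -> is_open t (fun x => W (Tpow T Tinv n x)).
Proof.
  intros cT cTi n. induction n using Z.peano_ind; intros W HW.
  - exact HW.
  - apply (open_ext _ _ _ (IHn (fun v => W (T v)) (cT W HW))).
    intro x; simpl; rewrite Tpow_succ; tauto.
  - apply (open_ext _ _ _ (IHn (fun v => W (Tinv v)) (cTi W HW))).
    intro x; simpl; rewrite Tpow_pred; tauto.
Qed.

Lemma finite_nbhd (t : topology X) (cT : continuous t T) (cTi : continuous t Tinv)
  (U : X -> Prop) (hU : is_closed t U) (p : Z) (y : X) :
  forall m : nat,
  (forall j, (0 <= j < Z.of_nat m)%Z -> exists n, ~ U (Tpow T Tinv (j + n * p) y)) ->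
  exists V, is_open t V /\ V y /\ forall w, V w -> forall j, (0 <= j < Z.of_nat m)%Z ->
     exists n, ~ U (Tpow T Tinv (j + n * p) w).
Proof.
  induction m as [|m IH]; intros H.
  - exists (fun _ => True). split; [apply open_full|]. split; [exact I|].
    intros w _ j Hj. lia.
  - destruct IH as [V [HV [Vy HVw]]].
    { intros j Hj. apply H. lia. }
    destruct (H (Z.of_nat m)) as [nm Hnm]. lia.
    exists (fun x => V x /\ (fun z => ~ U (Tpow T Tinv (Z.of_nat m + nm * p) z)) x).
    split; [apply open_inter; [exact HV| apply (Tpow_cont t cT cTi _ _ hU)]|].
    split; [split; assumption|].
    intros w [Vw Hw] j Hj.
    destruct (Z.eq_dec j (Z.of_nat m)) as [->|Hne].
    + exists nm; exact Hw.
    + apply HVw; [exact Vw| lia].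
Qed.
End Aux.

Theorem mainTheorem2 (X : Type) (t : topology X) (T Tinv : X -> X)
  (hmin : minimal_cantor_system t T Tinv)
  (p : Z) (hp : (1 <= p)%Z) (U : X -> Prop) (hU : is_clopen t U) :
  forall x y : X,
    set_empty_Z (PS T Tinv p x U) <-> set_empty_Z (PS T Tinv p y U).
Proof.
  destruct hmin as [_ [[hK1 [hK2 [cT cTi]]] hdense]].
  assert (L : forall x y k, PS T Tinv p x U k -> set_empty_Z (PS T Tinv p y U) -> False).
  { intros x y k Hk Hy.
    assert (Hj : forall j, exists n, ~ U (Tpow T Tinv (j + n * p) y)).
    { intro j. specialize (Hy j). unfold PS in Hy.
      apply not_all_ex_not in Hy. exact Hy. }
    destruct (finite_nbhd X T Tinv hK1 hK2 t cT cTi U (proj2 hU) p y (Z.to_nat p)) as [V [HV [Vy HVw]]].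
    { intros j _; apply Hj. }
    destruct (hdense x V HV (ex_intro _ y Vy)) as [w [Vw [m Hm]]].
    subst w.
    destruct (HVw _ Vw ((k - m) mod p)%Z) as [n Hn].
    { pose proof (Z.mod_pos_bound (k - m) p). lia. }
    apply Hn. rewrite (Tpow_add X T Tinv hK1 hK2).
    specialize (Hk (n - (k - m) / p)%Z).
    replace ((k - m) mod p + n * p + m)%Z with (k + (n - (k - m) / p) * p)%Z; [exact Hk|].
    rewrite Z.mod_eq by lia. ring. }
  intros x y; split; intros H k Hk.
  - apply (L y x k Hk H).
  - apply (L x y k Hk H).
Qed.
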